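(* Fix a vertex $v\in\mathbb{Z}_n$. For all $M,N\in\operatorname{CM}(A)$, the restriction map $\phi_v\colon\operatorname{Hom}_A(M,N)\to\operatorname{Hom}_Z(e_vM,e_vN)$, $f\mapsto f|_{e_vM}$, is injective, and its cokernel $K_v(M,N):=\operatorname{coker}\phi_v$ is a finite-dimensional $\mathbb{C}$-vector space. Thus there is a short exact sequence $0\to\operatorname{Hom}_A(M,N)\to\operatorname{Hom}_Z(e_vM,e_vN)\to K_v(M,N)\to 0$.
   Context: Fix integers $1\le m<n$. Let $Q$ be the quiver with vertex set $\mathbb{Z}_n$ and arrows $x_a\colon a-1\to a$ and $y_a\colon a\to a-1$ for $a\in\{1,\dots,n\}$. Let $A$ be the quotient of the complete path algebra $\widehat{\mathbb{C}Q}$ by the relations $xy=yx$ and $x^m=y^{n-m}$ at every vertex; its centre is $Z=\mathbb{C}[[t]]$, $t=xy$, and $e_j$ denotes the primitive idempotent at vertex $j$. $\operatorname{CM}(A)$ is the category of finitely generated $A$-modules that are free as $Z$-modules. *)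

(* Defs.v *)
From HB Require Import structures.
From mathcomp Require Import all_boot all_order all_algebra.
Set Implicit Arguments. Unset Strict Implicit. Unset Printing Implicit Defensive.
Import Order.TTheory GRing.Theory Num.Theory.
Local Open Scope ring_scope.

(* Formal power series with matrix coefficients: an element of pser F r s
   is a Z-linear map Z^r -> Z^s, Z = F[[t]], in row-vector convention
   (coefficient of t^k is the k-th matrix). *)
Definition pser (F : nzRingType) (r s : nat) := nat -> 'M[F]_(r, s).

(* composition "first f then g" (Cauchy product) *)
Definition pcomp (F : nzRingType) r s p (f : pser F r s) (g : pser F s p)
  : pser F r p := fun k => \sum_(i < k.+1) f i *m g (k - i)%N.

Definition pid (F : nzRingType) r : pser F r r :=
  fun k => if k == 0%N then 1%:M else 0.

Definition pt (F : nzRingType) r : pser F r r :=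
  fun k => if k == 1%N then 1%:M else 0.

(* rectangular identity; the genuine identity when r = s, used to
   transport along a vertex equality that holds only propositionally *)
Definition pcast (F : nzRingType) r s : pser F r s :=
  fun k => if k == 0%N then \matrix_(i < r, j < s) ((i : nat) == j)%:R else 0.

Definition peq (F : nzRingType) r s (f g : pser F r s) : Prop :=
  forall k, f k = g k.

(* A representation of the quiver Q with vertices 'I_n (= Z_n):
   e_a M = Z^(rk a); xa c is the arrow x_{c+1} : c -> c+1,
   ya c is the arrow y_{c+1} : c+1 -> c. *)
Record qrep (F : nzRingType) (n : nat) := QRep {
  rk : 'I_n -> nat;
  xa : forall c : 'I_n, pser F (rk c) (rk (ordS c));
  ya : forall c : 'I_n, pser F (rk (ordS c)) (rk c)
}.

Definition vadd n (k : nat) (a : 'I_n) : 'I_n := iter k (@ordS n) a.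

Fixpoint xpath (F : nzRingType) n (M : qrep F n) (k : nat) (a : 'I_n)
  : pser F (rk M a) (rk M (vadd k a)) :=
  match k with
  | 0%N => pid F (rk M a)
  | k'.+1 => pcomp (xpath M k' a) (xa M (vadd k' a))
  end.

Fixpoint ypath (F : nzRingType) n (M : qrep F n) (k : nat) (a : 'I_n)
  : pser F (rk M (vadd k a)) (rk M a) :=
  match k with
  | 0%N => pid F (rk M a)
  | k'.+1 => pcomp (ya M (vadd k' a)) (ypath M k' a)
  end.

(* M is an object of CM(A): e_a M free of finite rank over Z = F[[t]],
   where t acts as the loop xy = yx, and x^m = y^(n-m) at every vertex. *)
Definition isCM (F : nzRingType) n (m : nat) (M : qrep F n) : Prop :=
  (forall c : 'I_n, peq (pcomp (xa M c) (ya M c)) (pt F (rk M c))) /\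
  (forall c : 'I_n, peq (pcomp (ya M c) (xa M c)) (pt F (rk M (ordS c)))) /\
  (forall b : 'I_n,
     peq (pcomp (xpath M m (vadd (n - m) b))
                (pcast F (rk M (vadd m (vadd (n - m) b))) (rk M b)))
         (ypath M (n - m) b)).

Definition isHom (F : nzRingType) n (M N : qrep F n)
  (f : forall a : 'I_n, pser F (rk M a) (rk N a)) : Prop :=
  (forall c : 'I_n, peq (pcomp (f c) (xa N c)) (pcomp (xa M c) (f (ordS c)))) /\
  (forall c : 'I_n, peq (pcomp (f (ordS c)) (ya N c)) (pcomp (ya M c) (f c))).

Arguments isHom {F n} M N f.

(* Main.v *)
Require Import Defs.
From HB Require Import structures.
From mathcomp Require Import all_boot all_order all_algebra.
From Stdlib Require Import FunctionalExtensionality Lia.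
From mathcomp Require Import zify.
Import Order.TTheory GRing.Theory Num.Theory.
Local Open Scope ring_scope.
Notation pcomp := Defs.pcomp.

Section PS.
Context {F : nzRingType}.

Lemma pext r s (f g : pser F r s) : peq f g -> f = g.
Proof. move=> H; exact: functional_extensionality. Qed.

Definition tp r (j : nat) : pser F r r := fun k => if k == j then 1%:M else 0.
Definition tsh r s (j : nat) (f : pser F r s) : pser F r s :=
  fun k => if (j <= k)%N then f (k - j)%N else 0.

Arguments tsh {r s}.
Lemma pcomp_rev r s p (f : pser F r s) (g : pser F s p) k :
  pcomp f g k = \sum_(i < k.+1) f (k - i)%N *m g i.
Proof.
rewrite /pcomp (reindex_inj rev_ord_inj) /=.
by apply: eq_bigr => j _; rewrite subSS subKn // -ltnS.
Qed.

Lemma pcompA r s p q (f : pser F r s) (g : pser F s p) (h : pser F p q) :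
  pcomp (pcomp f g) h = pcomp f (pcomp g h).
Proof.
apply: pext => i; symmetry; rewrite {1}/pcomp pcomp_rev.
pose coef3 j k := f j *m (g (i - j - k)%N *m h k).
transitivity (\sum_(j < i.+1) \sum_(k < i.+1 | (k <= i - j)%N) coef3 j k).
  apply: eq_bigr => /= j _; rewrite pcomp_rev mulmx_sumr /=.
  by rewrite (big_ord_narrow_leq (leq_subr _ _)).
rewrite (exchange_big_dep predT) //=; apply: eq_bigr => k _.
transitivity (\sum_(j < i.+1 | (j <= i - k)%N) coef3 j k).
  apply: eq_bigl => j; rewrite -ltnS -(ltnS j) -!subSn ?leq_ord //.
  by rewrite -subn_gt0 -(subn_gt0 j) -!subnDA addnC.
rewrite (big_ord_narrow_leq (leq_subr _ _)) /pcomp mulmx_suml /=.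
by apply: eq_bigr => j _; rewrite /coef3 -!subnDA addnC mulmxA.
Qed.

Lemma pcomp_tpl r s j (f : pser F r s) : pcomp (tp r j) f = tsh j f.
Proof.
apply: pext => k; rewrite /pcomp /tsh.
transitivity (\sum_(i < k.+1 | (i == j :> nat)) f (k - i)%N).
  rewrite [RHS]big_mkcond; apply: eq_bigr => i _ /=; rewrite /tp.
  by case: eqP => _; rewrite ?mul1mx ?mul0mx.
by rewrite (big_ord1_eq _ (fun i => f (k - i)%N)) ltnS.
Qed.

Lemma pcomp_tpr r s j (f : pser F r s) : pcomp f (tp s j) = tsh j f.
Proof.
apply: pext => k; rewrite pcomp_rev /tsh.
transitivity (\sum_(i < k.+1 | (i == j :> nat)) f (k - i)%N).
  rewrite [RHS]big_mkcond; apply: eq_bigr => i _ /=; rewrite /tp.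
  by case: eqP => _; rewrite ?mulmx1 ?mulmx0.
by rewrite (big_ord1_eq _ (fun i => f (k - i)%N)) ltnS.
Qed.

Lemma tsh0 r s (f : pser F r s) : tsh 0 f = f.
Proof. by apply: pext => k; rewrite /tsh subn0. Qed.

Lemma pcomp1l r s (f : pser F r s) : pcomp (pid F r) f = f.
Proof. by rewrite -[pid F r]/(tp r 0) pcomp_tpl tsh0. Qed.

Lemma pcomp1r r s (f : pser F r s) : pcomp f (pid F s) = f.
Proof. by rewrite -[pid F s]/(tp s 0) pcomp_tpr tsh0. Qed.

Lemma tshl r s p j (f : pser F r s) (g : pser F s p) :
  pcomp (tsh j f) g = tsh j (pcomp f g).
Proof. by rewrite -pcomp_tpl pcompA pcomp_tpl. Qed.

Lemma tshr r s p j (f : pser F r s) (g : pser F s p) :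
  pcomp f (tsh j g) = tsh j (pcomp f g).
Proof. by rewrite -pcomp_tpr -pcompA pcomp_tpr. Qed.

Lemma tsh_tsh r s i j (f : pser F r s) : tsh i (tsh j f) = tsh (i + j) f.
Proof.
apply: pext => k; rewrite /tsh.
case: (leqP i k) => ik; case: (leqP j (k - i)) => jk; 
  case: (leqP (i + j) k) => ijk //; try lia.
by rewrite subnDA.
Qed.

Lemma tsh_inj r s j (f g : pser F r s) : tsh j f = tsh j g -> f = g.
Proof.
move=> H; apply: pext => k; have := congr1 (fun u => u (k + j)%N) H.
by rewrite /tsh leq_addl addnK.
Qed.

Lemma ptE r : pt F r = tp r 1. Proof. by []. Qed.

Lemma pcast_id r : pcast F r r = pid F r.
Proof.
apply: pext => k; rewrite /pcast /pid; case: eqP => // _.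
by apply/matrixP => i j; rewrite !mxE.
Qed.

Definition psub r s (f g : pser F r s) : pser F r s := fun k => f k - g k.
Definition pzero r s : pser F r s := fun _ => 0.
Arguments psub {r s}.

Lemma pcompBl r s p (f g : pser F r s) (h : pser F s p) :
  pcomp (psub f g) h = psub (pcomp f h) (pcomp g h).
Proof.
by apply: pext => k; rewrite /pcomp /psub -sumrB; apply: eq_bigr => i _; rewrite mulmxBl.
Qed.

Lemma pcompBr r s p (f : pser F r s) (g h : pser F s p) :
  pcomp f (psub g h) = psub (pcomp f g) (pcomp f h).
Proof.
by apply: pext => k; rewrite /pcomp /psub -sumrB; apply: eq_bigr => i _; rewrite mulmxBr.
Qed.

Lemma pcomp0l r s p (h : pser F s p) : pcomp (pzero r s) h = pzero r p.
Proof. by apply: pext => k; rewrite /pcomp big1 // => i _; rewrite mul0mx. Qed.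

Lemma pcomp0r r s p (h : pser F r s) : pcomp h (pzero s p) = pzero r p.
Proof. by apply: pext => k; rewrite /pcomp big1 // => i _; rewrite mulmx0. Qed.

Lemma tsh_zero r s j : tsh j (pzero r s) = pzero r s.
Proof. by apply: pext => k; rewrite /tsh /pzero; case: ifP. Qed.

End PS.
Arguments tsh {F r s}.
Arguments psub {F r s}.
Arguments tp {F} r.
Arguments pext {F r s f g}.
Arguments pcompA {F r s p q}.

Section Vert.
Context {n : nat}.
Implicit Types a b v : 'I_n.

Lemma vadd_val k a : (vadd k a : nat) = ((a + k) %% n)%N.
Proof.
elim: k => [|k IH]; first by rewrite addn0 modn_small.
have -> : vadd k.+1 a = ordS (vadd k a) by [].
by rewrite /= IH -addn1 modnDml addn1 addnS.
Qed.

Lemma vadd_add j i a : vadd (j + i) a = vadd j (vadd i a).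
Proof.
apply: val_inj; rewrite /= !vadd_val modnDml; congr (_ %% _)%N; lia.
Qed.

Lemma vadd_n a : vadd n a = a.
Proof. by apply: val_inj; rewrite /= vadd_val modnDr modn_small. Qed.

Definition kidx (v a : 'I_n) := ((a + n - v) %% n)%N.

Lemma vadd_kidx v a : vadd (kidx v a) v = a.
Proof.
apply: val_inj; rewrite /= vadd_val /kidx modnDmr.
have -> : (v + (a + n - v) = a + n)%N by have := ltn_ord v; lia.
by rewrite modnDr modn_small.
Qed.

Lemma kidx_lt v a : (kidx v a < n)%N.
Proof. by rewrite /kidx ltn_pmod //; have := ltn_ord v; lia. Qed.

Lemma kidx_vadd v k : (k < n)%N -> kidx v (vadd k v) = k.
Proof.
move=> kn; have := congr1 val (vadd_kidx v (vadd k v)).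
rewrite /= !vadd_val => /eqP; rewrite eqn_modDl => /eqP.
by rewrite !modn_small // kidx_lt.
Qed.

Lemma ordS_wrap v : ordS (vadd n.-1 v) = v.
Proof.
have -> : ordS (vadd n.-1 v) = vadd n.-1.+1 v by [].
by rewrite prednK ?vadd_n //; have := ltn_ord v; lia.
Qed.

Lemma kidx_wrap v : kidx v (ordS (vadd n.-1 v)) = 0%N.
Proof.
rewrite ordS_wrap; change (kidx v (vadd 0 v) = 0%N); apply: kidx_vadd.
by have := ltn_ord v; lia.
Qed.

End Vert.
Arguments vadd_val {n}.
Arguments vadd_add {n}.
Arguments vadd_n {n}.
Arguments kidx {n}.
Arguments vadd_kidx {n}.
Arguments kidx_lt {n}.
Arguments kidx_vadd {n}.
Arguments ordS_wrap {n}.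
Arguments kidx_wrap {n}.

Section Casts.
Context {F : nzRingType}.
Context {n : nat}.
Implicit Types a b v : 'I_n.
Implicit Types M : qrep F n.

Definition C (M : qrep F n) a b := pcast F (rk M a) (rk M b).

Lemma C_id M a : C M a a = pid F _.
Proof. exact: pcast_id. Qed.

Lemma C_trans M a b c : a = b -> pcomp (C M a b) (C M b c) = C M a c.
Proof. by move=> ->; rewrite C_id pcomp1l. Qed.

Lemma C_xa M a b : a = b ->
  pcomp (C M a b) (xa M b) = pcomp (xa M a) (C M (ordS a) (ordS b)).
Proof. by move=> ->; rewrite !C_id pcomp1l pcomp1r. Qed.

Lemma C_ya M a b : a = b ->
  pcomp (C M (ordS a) (ordS b)) (ya M b) = pcomp (ya M a) (C M a b).
Proof. by move=> ->; rewrite !C_id pcomp1l pcomp1r. Qed.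

Lemma ypath0 M a : ypath M 0 a = pid F _. Proof. by []. Qed.
Lemma xpath0 M a : xpath M 0 a = pid F _. Proof. by []. Qed.
Lemma ypathS M k a : ypath M k.+1 a = pcomp (ya M (vadd k a)) (ypath M k a).
Proof. by []. Qed.
Lemma xpathS M k a : xpath M k.+1 a = pcomp (xpath M k a) (xa M (vadd k a)).
Proof. by []. Qed.

Lemma ypath_idx M k1 k2 a : k1 = k2 ->
  ypath M k1 a = pcomp (C M (vadd k1 a) (vadd k2 a)) (ypath M k2 a).
Proof. by move=> ->; rewrite C_id pcomp1l. Qed.

Lemma ypath_add M j i a : ypath M (j + i) a =
  pcomp (C M (vadd (j + i) a) (vadd j (vadd i a)))
        (pcomp (ypath M j (vadd i a)) (ypath M i a)).
Proof.
elim: j => [|j IH]; first by rewrite add0n C_id ypath0 !pcomp1l.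
rewrite addSn !ypathS -!pcompA (C_ya _ _ _ (vadd_add j i a)) !pcompA -IH.
by [].
Qed.

Lemma tp_tsh r j : tp (F:=F) r j = tsh j (pid F r).
Proof. by rewrite -pcomp_tpl pcomp1r. Qed.

Section Mod.
Variable M : qrep F n.
Variable m : nat.
Hypothesis HM : isCM m M.

Lemma xy c : pcomp (xa M c) (ya M c) = tsh 1 (pid F _).
Proof. by rewrite -tp_tsh; apply: pext; case: HM. Qed.

Lemma yx c : pcomp (ya M c) (xa M c) = tsh 1 (pid F _).
Proof. by rewrite -tp_tsh; apply: pext; case: HM => _ []. Qed.

Lemma xpath_ypath k a : pcomp (xpath M k a) (ypath M k a) = tsh k (pid F _).
Proof.
elim: k => [|k IH]; first by rewrite tsh0 xpath0 pcomp1l.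
rewrite xpathS ypathS pcompA -(pcompA (xa M _)) xy tshl pcomp1l tshr IH.
by rewrite tsh_tsh add1n.
Qed.

Lemma ypath_xpath k a : pcomp (ypath M k a) (xpath M k a) = tsh k (pid F _).
Proof.
elim: k => [|k IH]; first by rewrite tsh0 xpath0 pcomp1l.
rewrite xpathS ypathS pcompA -(pcompA (ypath M _ _)) IH tshl pcomp1l tshr.
by rewrite yx tsh_tsh addn1.
Qed.


Lemma K2 (v : 'I_n) : (1 <= m)%N -> (m < n)%N ->
  ypath M n.-1 v = tsh m.-1 (pcomp (xa M (vadd n.-1 v)) (C M (ordS (vadd n.-1 v)) v)).
Proof.
case: HM => _ [_ rel].
case: m rel => [|m'] rel // _ hmn.
have e : n.-1 = (m' + (n - m'.+1))%N by lia.
rewrite (ypath_idx _ _ _ v e) ypath_add -(pext (rel v)) xpathS.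
rewrite -!(pcompA (ypath M _ _)) ypath_xpath !tshl pcomp1l !tshr /=; congr (tsh m' _).
have ew : vadd n.-1 v = vadd m' (vadd (n - m'.+1) v) by rewrite e vadd_add.
rewrite -(pcompA (C M _ _)) C_trans; last by rewrite e.
rewrite -pcompA (C_xa _ _ _ ew) pcompA C_trans //.
by rewrite ew.
Qed.

Lemma K3 (v : 'I_n) : (1 <= m)%N -> (m < n)%N ->
  ypath M n.-1.+1 v = tsh m (C M (ordS (vadd n.-1 v)) v).
Proof.
move=> hm hmn; rewrite ypathS K2 // tshr -pcompA yx tshl pcomp1l tsh_tsh.
by rewrite addn1 (prednK hm).
Qed.

Lemma K1 (v : 'I_n) : (1 <= m)%N -> (m < n)%N ->
  xpath M n.-1.+1 v = tsh (n - m) (C M v (ordS (vadd n.-1 v))).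
Proof.
move=> hm hmn; have H := xpath_ypath n.-1.+1 v.
have e2 : tsh n.-1.+1 (pid F (rk M v)) = tsh m (tsh (n - m) (pid F (rk M v))).
  by rewrite tsh_tsh; congr (tsh _ _); lia.
rewrite K3 // tshr e2 in H; move/tsh_inj: H => H.
rewrite -[LHS]pcomp1r -(C_id M (ordS (vadd n.-1 v))).
rewrite -(C_trans _ _ v) ?ordS_wrap // -pcompA H tshl pcomp1l.
by [].
Qed.

End Mod.
End Casts.

Lemma peq_of_eq (F : nzRingType) r s (f g : pser F r s) : f = g -> peq f g.
Proof. by move=> ->. Qed.

Section Build.
Context {F : nzRingType} {n : nat}.

Lemma build_hom (M N : qrep F n) (v : 'I_n)
  (g : forall k : nat, pser F (rk M (vadd k v)) (rk N (vadd k v))) :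
  (forall k, (k.+1 < n)%N -> pcomp (g k) (xa N (vadd k v)) = pcomp (xa M (vadd k v)) (g k.+1)) ->
  (forall k, (k.+1 < n)%N -> pcomp (g k.+1) (ya N (vadd k v)) = pcomp (ya M (vadd k v)) (g k)) ->
  pcomp (g n.-1) (xa N (vadd n.-1 v)) =
    pcomp (xa M (vadd n.-1 v)) (pcomp (C M (ordS (vadd n.-1 v)) v)
      (pcomp (g 0%N) (C N v (ordS (vadd n.-1 v))))) ->
  pcomp (pcomp (C M (ordS (vadd n.-1 v)) v) (pcomp (g 0%N) (C N v (ordS (vadd n.-1 v)))))
     (ya N (vadd n.-1 v)) = pcomp (ya M (vadd n.-1 v)) (g n.-1) ->
  isHom M N (fun a => pcomp (C M a (vadd (kidx v a) v))
                        (pcomp (g (kidx v a)) (C N (vadd (kidx v a) v) a))).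
Proof.
move=> Gx Gy Wx Wy; split=> c; apply: peq_of_eq;
  have [k kn ec] : exists2 k, (k < n)%N & c = vadd k v :=
    ex_intro2 _ _ (kidx v c) (kidx_lt v c) (esym (vadd_kidx v c));
  subst c; rewrite (kidx_vadd v k kn) !C_id pcomp1l pcomp1r;
  (case: (ltnP k.+1 n) => hk;
   [ rewrite (kidx_vadd v k.+1 hk) !C_id pcomp1l pcomp1r
   | have ek : k = n.-1 by lia
   ]).
- exact: Gx.
- subst k; rewrite kidx_wrap; exact: Wx.
- exact: Gy.
- subst k; rewrite kidx_wrap; exact: Wy.
Qed.

End Build.

Theorem lemma5p2 (F : numClosedFieldType) (n m : nat)
  (hm : (1 <= m)%N) (hmn : (m < n)%N) (v : 'I_n) (M N : qrep F n)
  (HM : isCM m M) (HN : isCM m N) :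
  (* phi_v is injective *)
  (forall f g : forall a : 'I_n, pser F (rk M a) (rk N a),
     isHom M N f -> isHom M N g -> peq (f v) (g v) ->
     forall a : 'I_n, peq (f a) (g a)) /\
  (* coker phi_v is a finite-dimensional F-vector space *)
  (exists (d : nat) (G : 'I_d -> pser F (rk M v) (rk N v)),
     forall h : pser F (rk M v) (rk N v),
     exists f : forall a : 'I_n, pser F (rk M a) (rk N a),
       isHom M N f /\
       exists c : 'I_d -> F,
         peq h (fun k => f v k + \sum_(i < d) c i *: G i k)).
Proof.
have n0 : (0 < n)%N by lia.
split.
  move=> f g [Hf1 Hf2] [Hg1 Hg2] Hv.
  suff H0 : forall k, psub (f (vadd k v)) (g (vadd k v)) = pzero _ _.
    move=> a j; have := H0 (kidx v a); rewrite vadd_kidx => E.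
    have := congr1 (fun u => u j) E; rewrite /psub /pzero => /eqP.
    by rewrite subr_eq0 => /eqP.
  elim=> [|k IH]; first by apply: pext => j; rewrite /psub Hv subrr.
  set c := vadd k v.
  have E1 : pcomp (psub (f (ordS c)) (g (ordS c))) (ya N c) = pzero _ _.
    by rewrite pcompBl (pext (Hf2 c)) (pext (Hg2 c)) -pcompBr IH pcomp0r.
  apply: (@tsh_inj _ _ _ 1%N).
  rewrite tsh_zero -[psub _ _]pcomp1r -tshr -(yx N m HN c) -pcompA E1 pcomp0l.
  by [].
pose T := ('I_n * ('I_(rk M v) * 'I_(rk N v)))%type.
exists #|{: T}|.
exists (fun (i : 'I_#|{: T}|) (l : nat) => if l == (enum_val i).1 :> nat
          then delta_mx (enum_val i).2.1 (enum_val i).2.2 else 0 : 'M[F]_(rk M v, rk N v)).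
move=> h.
pose h' : pser F (rk M v) (rk N v) := fun l => h (l + n)%N.
pose g := fun k : nat => tsh (n - k) (pcomp (ypath M k v) (pcomp h' (xpath N k v))).
exists (fun a => pcomp (C M a (vadd (kidx v a) v))
                        (pcomp (g (kidx v a)) (C N (vadd (kidx v a) v) a))).
split.
  apply: build_hom.
  - move=> k hk.
    rewrite /g ypathS xpathS !tshl !tshr -(pcompA (xa M _)) -(pcompA (xa M _)).
    rewrite (xy M m HM) tshl pcomp1l !tshl tsh_tsh !pcompA; congr (tsh _ _); lia.
  - move=> k hk.
    rewrite /g ypathS xpathS !tshl !tshr !pcompA (xy N m HN) !tshr pcomp1r tsh_tsh.
    congr (tsh _ _); lia.
  - rewrite /g subn0 ypath0 xpath0 pcomp1l pcomp1r (K2 M m HM v hm hmn) !tshl !tshr.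
    rewrite !pcompA -xpathS (K1 N m HN v hm hmn) !tshr !tsh_tsh; congr (tsh _ _); lia.
  - set w := vadd n.-1 v.
    have canc : forall r (P Q : pser F r (rk N w)),
        pcomp P (xa N w) = pcomp Q (xa N w) -> P = Q.
      move=> r P Q E; apply: (@tsh_inj _ _ _ 1%N).
      rewrite -(pcomp1r _ _ P) -(pcomp1r _ _ Q) -!tshr -(xy N m HN w) -!pcompA E.
      by [].
    apply: canc.
    rewrite /g subn0 ypath0 xpath0 pcomp1l pcomp1r (K2 M m HM v hm hmn) !tshl !tshr.
    rewrite !tshl !pcompA -xpathS (K1 N m HN v hm hmn) (yx N m HN) -(pcompA (ya M _)) (yx M m HM).
    rewrite !tshl !tshr pcomp1l pcomp1r !tsh_tsh; congr (tsh _ _); lia.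
exists (fun i : 'I_#|{: T}| => h (enum_val i).1 (enum_val i).2.1 (enum_val i).2.2).
move=> l /=.
rewrite (kidx_vadd v 0 n0) !C_id pcomp1l pcomp1r /g subn0 ypath0 xpath0 pcomp1l pcomp1r.
pose E := fun p : T => h p.1 p.2.1 p.2.2 *:
   (if l == p.1 :> nat then delta_mx p.2.1 p.2.2 else 0 : 'M[F]_(rk M v, rk N v)).
rewrite -(big_enum_val E).
have S : \sum_(x in {: T}) E x = if (l < n)%N then h l else 0.
  transitivity (\sum_(a : 'I_n) \sum_(q : 'I_(rk M v) * 'I_(rk N v)) E (a, q)).
    by rewrite pair_bigA; apply: eq_big => // [[a q]].
  transitivity (\sum_(a < n) (if (a == l :> nat) then h l else 0)).
    apply: eq_bigr => a _.
    transitivity (\sum_(i < rk M v) \sum_(j < rk N v) E (a, (i, j))).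
      by rewrite pair_bigA; apply: eq_bigr => [[i j]].
    rewrite /E /=; case: (boolP (l == a :> nat)) => e.
      rewrite eq_sym e; move/eqP: e => <-.
      by rewrite -matrix_sum_delta.
    rewrite eq_sym (negbTE e) big1 // => i _; rewrite big1 // => j _.
    by rewrite scaler0.
  by rewrite -big_mkcond /= (big_ord1_eq _ (fun _ => h l)).
rewrite S /tsh /h'; case: leqP => hl; rewrite ?addr0 ?add0r ?subnK //.
Qed.
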